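(* Let $A=\sigma(R)\langle x_1,\dots,x_n\rangle$ be a quasi-commutative bijective $\sigma$-PBW extension of $R$ (under the standing assumptions below). Let $M\neq0$ be a submodule of $A^m$ and let $G$ be a finite set of nonzero generators of $M$. Then $G$ is a Gröbner basis of $M$ if and only if for every $F=\{\mathbf g_1,\dots,\mathbf g_s\}\subseteq G$ with $\mathbf X_F\neq\mathbf 0$ and every $(b_1,\dots,b_s)\in B_F$ we have $\sum_{i=1}^sb_ix^{\gamma_i}\mathbf g_i\xrightarrow{G}_+\mathbf 0$.
   Context: Let $R\subseteq A$ be rings. $A$ is a $\sigma$-PBW extension of $R$, written $A=\sigma(R)\langle x_1,\dots,x_n\rangle$, if there are $x_1,\dots,x_n\in A\setminus R$ such that: (i) $A$ is a free left $R$-module with basis $\mathrm{Mon}(A)=\{x^\alpha=x_1^{\alpha_1}\cdots x_n^{\alpha_n}:\alpha\in\mathbb N^n\}$, with $x^0=1$; (ii) for every $i$ and every $r\in R\setminus\{0\}$ there is $c_{i,r}\in R\setminus\{0\}$ with $x_ir-c_{i,r}x_i\in R$; (iii) for all $i,j$ there is $c_{i,j}\in R\setminus\{0\}$ with $x_jx_i-c_{i,j}x_ix_j\in R+Rx_1+\dots+Rx_n$. There are injective ring endomorphisms $\sigma_i$ of $R$ and $\sigma_i$-derivations $\delta_i$ with $x_ir=\sigma_i(r)x_i+\delta_i(r)$. Write $\sigma^\alpha=\sigma_1^{\alpha_1}\circ\cdots\circ\sigma_n^{\alpha_n}$ and $|\alpha|=\sum\alpha_i$. For $\alpha,\beta$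 there are unique $c_{\alpha,\beta}\in R$ (left invertible) and $p_{\alpha,\beta}\in A$ with $x^\alpha x^\beta=c_{\alpha,\beta}x^{\alpha+\beta}+p_{\alpha,\beta}$, where $p_{\alpha,\beta}=0$ or $\deg p_{\alpha,\beta}<|\alpha+\beta|$. $A$ is quasi-commutative if $x_ir=c_{i,r}x_i$ and $x_jx_i=c_{i,j}x_ix_j$ exactly. $A$ is bijective if each $\sigma_i$ is bijective and $c_{i,j}$ is invertible for $i<j$. Standing assumptions: $R$ is left Gröbner soluble (left Noetherian; left ideal membership decidable with computable coefficients; finite generating sets of $\mathrm{Syz}_R[r_1\cdots r_k]=\{(b_1,\dots,b_k)\in R^k:\sum b_ir_i=0\}$ computable). $\mathrm{Mon}(A)$ carries a monomial order, i.e. a total order $\succeq$ with: (a) $x^\beta\succeq x^\alpha\Rightarrow lm(x^\gamma x^\beta x^\lambda)\succeq lm(x^\gamma x^\alpha x^\lambda)$; (b) $x^\alpha\succeq1$; (c) $|\beta|\ge|\alpha|\Rightarrow x^\beta\succeq x^\alpha$. $A^m$ is the free left $A$-module of column vectors with canonical basis $\mathbf e_i$. Monomials of $A^m$ are $x^\alpha\mathbf e_i$, with $\mathrm{ind}=i$, $\exp=\alpha$, $\deg=|\alpha|$. The monomial $x^\alpha\mathbf e_i$ divides $x^\beta\mathbf e_j$ iff $i=j$ and $\beta_k\ge\alpha_k$ for all $k$. The lcm of $x^\alpha\mathbf e_i$ and $x^\beta\mathbf e_j$ is $\mathbf 0$ if $i\neq j$, and $x^\gamma\mathbf e_i$ with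 $\gamma_k=\max(\alpha_k,\beta_k)$ if $i=j$. $\mathrm{Mon}(A^m)$ carries a monomial order, i.e. a total order with: (i) $lm(x^\beta x^\alpha)\mathbf e_i\succeq x^\alpha\mathbf e_i$; (ii) $x^\beta\mathbf e_j\succeq x^\alpha\mathbf e_i\Rightarrow lm(x^\gamma x^\beta)\mathbf e_j\succeq lm(x^\gamma x^\alpha)\mathbf e_i$; (iii) $\deg\mathbf X\ge\deg\mathbf Y\Rightarrow\mathbf X\succeq\mathbf Y$. For nonzero $\mathbf f=c_1\mathbf X_1+\dots+c_t\mathbf X_t$ with $c_i\in R\setminus\{0\}$ and $\mathbf X_1\succ\dots\succ\mathbf X_t$, set $lm(\mathbf f)=\mathbf X_1$, $lc(\mathbf f)=c_1$, $lt(\mathbf f)=c_1\mathbf X_1$. Also $lm(\mathbf 0)=\mathbf 0$ and $\mathbf X\succ\mathbf 0$. Reduction. Let $F$ be a finite set of nonzero vectors and $\mathbf f,\mathbf h\in A^m$. We write $\mathbf f\xrightarrow{F}\mathbf h$ (one step) if there are $\mathbf f_1,\dots,\mathbf f_t\in F$ and $r_1,\dots,r_t\in R$ with: (1) $lm(\mathbf f_i)\mid lm(\mathbf f)$, with $\alpha_i+\exp(lm\,\mathbf f_i)=\exp(lm\,\mathbf f)$; (2) $lc(\mathbf f)=\sum r_i\sigma^{\alpha_i}(lc\,\mathbf f_i)c_{\alpha_i,\exp(lm\,\mathbf f_i)}$; (3) $\mathbf h=\mathbf f-\sum r_ix^{\alpha_i}\mathbf f_i$. By convention $\mathbf 0\xrightarrow{F}\mathbf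 0$. $\mathbf f\xrightarrow{F}_+\mathbf h$ means a finite chain of one-step reductions from $\mathbf f$ to $\mathbf h$. $\mathbf f$ is reduced w.r.t. $F$ if $\mathbf f=\mathbf 0$ or no one-step reduction of $\mathbf f$ exists; otherwise it is reducible. Gröbner basis. For a submodule $M\neq0$ of $A^m$, a nonempty finite set $G$ of nonzero vectors of $M$ is a Gröbner basis for $M$ if every nonzero $\mathbf f\in M$ is reducible w.r.t. $G$. Syzygy data. For $F=\{\mathbf g_1,\dots,\mathbf g_s\}\subseteq A^m$: - $\mathbf X_F=\mathrm{lcm}\{lm(\mathbf g_1),\dots,lm(\mathbf g_s)\}$; - $\beta_i=\exp(lm\,\mathbf g_i)$; - when $\mathbf X_F\neq\mathbf 0$, $\gamma_i\in\mathbb N^n$ is defined by $\gamma_i+\beta_i=\exp(\mathbf X_F)$. $B_F$ is a finite generating set of the left $R$-module $\mathrm{Syz}_R\big[\sigma^{\gamma_1}(lc\,\mathbf g_1)c_{\gamma_1,\beta_1}\ \cdots\ \sigma^{\gamma_s}(lc\,\mathbf g_s)c_{\gamma_s,\beta_s}\big]$. *)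

(* Defs.v *)
From HB Require Import structures.
From mathcomp Require Import all_boot all_order all_algebra.
From Stdlib Require Import ClassicalEpsilon.
Set Implicit Arguments. Unset Strict Implicit. Unset Printing Implicit Defensive.
Import GRing.Theory.
Local Open Scope ring_scope.

Definition exps (n : nat) := {ffun 'I_n -> nat}.
Definition eadd n (a b : exps n) : exps n := [ffun k => (a k + b k)%N].
(* componentwise (truncated) difference; used only when b <= a componentwise *)
Definition esub n (a b : exps n) : exps n := [ffun k => (a k - b k)%N].
Definition e0 n : exps n := [ffun _ => 0%N].
Definition edeg n (a : exps n) : nat := (\sum_(k < n) a k)%N.

Definition total_order (T : Type) (r : rel T) :=
  [/\ reflexive r, antisymmetric r, transitive r & total r].

Definition left_noetherian (R : nzRingType) : Prop :=
  forall I : R -> Prop,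
    I 0 -> (forall a b, I a -> I b -> I (a + b)) -> (forall r a, I a -> I (r * a)) ->
    exists s : seq R, (forall a, a \in s -> I a) /\
      forall a, I a -> exists c : seq R, size c = size s /\
        a = \sum_(k < size s) c`_k * s`_k.

Section PBW.
Variables (R A : nzRingType) (n m : nat).
Variable iota : R -> A.
Variable x : 'I_n -> A.
Variable sigma : 'I_n -> R -> R.
Variable cf : A -> exps n -> R.     (* coordinates w.r.t. the basis Mon(A) *)
Variable ordA : rel (exps n).       (* monomial order on Mon(A): ordA a b <-> x^a ⪰ x^b *)
Variable ordm : rel (exps n * 'I_m). (* monomial order on Mon(A^m): ordm (a,i) (b,j) <-> x^a e_i ⪰ x^b e_j *)

Definition xmon (a : exps n) : A := \prod_(i < n) x i ^+ a i.

Definition mon_lin_indep : Prop :=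
  forall (s : seq (exps n)) (r : exps n -> R), uniq s ->
    \sum_(a <- s) iota (r a) * xmon a = 0 -> forall a, a \in s -> r a = 0.
Definition coord_repr : Prop :=
  forall p : A, exists s : seq (exps n), [/\ uniq s,
     (forall a, cf p a != 0 -> a \in s) &
     p = \sum_(a <- s) iota (cf p a) * xmon a].

Definition sigma_pow (a : exps n) (r : R) : R :=
  foldr (fun i acc => iter (a i) (sigma i) acc) r (enum 'I_n).

Definition cab (a b : exps n) : R := cf (xmon a * xmon b) (eadd a b).

(* leading monomial of an element of A (None = the zero monomial 0) *)
Definition lmA (p : A) : option (exps n) :=
  epsilon (inhabits None) (fun o => match o with
    | None => p = 0
    | Some a => cf p a != 0 /\ forall b, cf p b != 0 -> ordA a b
    end).

Definition ogeA (X Y : option (exps n)) : bool :=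
  match X, Y with
  | Some a, Some b => ordA a b
  | _, None => true
  | None, Some _ => false
  end.

Definition monorderA : Prop :=
  [/\ total_order ordA,
      (forall a b c l, ordA b a ->
          ogeA (lmA (xmon c * xmon b * xmon l)) (lmA (xmon c * xmon a * xmon l))),
      (forall a, ordA a (e0 n)) &
      (forall a b, (edeg a < edeg b)%N -> ordA b a)].

Definition vmon := (exps n * 'I_m)%type.

Definition cfv (f : 'cV[A]_m) (X : vmon) : R := cf (f X.2 ord0) X.1.

Definition ogeV (X Y : option vmon) : bool :=
  match X, Y with
  | Some a, Some b => ordm a b
  | _, None => true
  | None, Some _ => false
  end.

Definition monorderV : Prop :=
  [/\ total_order ordm,
      (forall (a b : exps n) (i : 'I_m),
          ogeV (omap (fun g => (g, i)) (lmA (xmon b * xmon a))) (Some (a, i))),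
      (forall (a b c : exps n) (i j : 'I_m), ordm (b, j) (a, i) ->
          ogeV (omap (fun g => (g, j)) (lmA (xmon c * xmon b)))
               (omap (fun g => (g, i)) (lmA (xmon c * xmon a)))) &
      (forall X Y : vmon, (edeg Y.1 < edeg X.1)%N -> ordm X Y)].

Definition lmv (f : 'cV[A]_m) : option vmon :=
  epsilon (inhabits None) (fun o => match o with
    | None => f = 0
    | Some X => cfv f X != 0 /\ forall Y, cfv f Y != 0 -> ordm X Y
    end).

Definition lcv (f : 'cV[A]_m) : R :=
  match lmv f with Some X => cfv f X | None => 0 end.

Definition expo (o : option vmon) : exps n :=
  match o with Some X => X.1 | None => e0 n end.

Definition mdiv (o1 o2 : option vmon) : bool :=
  match o1, o2 with
  | Some (a, i), Some (b, j) => (i == j) && [forall k, (a k <= b k)%N]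
  | _, _ => false
  end.

(* lcm of monomials of A^m (None = 0) *)
Definition mlcm (o1 o2 : option vmon) : option vmon :=
  match o1, o2 with
  | Some (a, i), Some (b, j) =>
      if i == j then Some ([ffun k => maxn (a k) (b k)], i) else None
  | _, _ => None
  end.

Definition red1 (G : seq 'cV[A]_m) (f h : 'cV[A]_m) : Prop :=
  (f = 0 /\ h = 0) \/
  (f != 0 /\ exists L : seq ('cV[A]_m * R),
     let al (g : 'cV[A]_m) := esub (expo (lmv f)) (expo (lmv g)) in
     [/\ all (fun p => p.1 \in G) L,
         all (fun p => mdiv (lmv p.1) (lmv f)) L,
         lcv f = \sum_(p <- L) p.2 * sigma_pow (al p.1) (lcv p.1) * cab (al p.1) (expo (lmv p.1)) &
         h = f - \sum_(p <- L) (iota p.2 * xmon (al p.1)) *: p.1]).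

Inductive red_plus (G : seq 'cV[A]_m) : 'cV[A]_m -> 'cV[A]_m -> Prop :=
  | rp_one f h : red1 G f h -> red_plus G f h
  | rp_step f g h : red1 G f g -> red_plus G g h -> red_plus G f h.

Definition reducible (G : seq 'cV[A]_m) (f : 'cV[A]_m) : Prop :=
  f != 0 /\ exists h, red1 G f h.

Definition is_submodule (M : 'cV[A]_m -> Prop) : Prop :=
  [/\ M 0, (forall u v, M u -> M v -> M (u + v)) & (forall (a : A) u, M u -> M (a *: u))].

Definition spanned (G : seq 'cV[A]_m) (v : 'cV[A]_m) : Prop :=
  exists a : seq A, size a = size G /\ v = \sum_(i < size G) a`_i *: G`_i.

Definition is_groebner (M : 'cV[A]_m -> Prop) (G : seq 'cV[A]_m) : Prop :=
  [/\ G != [::], all (fun g => g != 0) G, (forall g, g \in G -> M g) &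
      forall f, M f -> f != 0 -> reducible G f].

Definition XF (F : seq 'cV[A]_m) : option vmon :=
  match F with
  | [::] => None
  | g :: F' => foldl (fun acc h => mlcm acc (lmv h)) (lmv g) F'
  end.

Definition gam (F : seq 'cV[A]_m) (g : 'cV[A]_m) : exps n :=
  esub (expo (XF F)) (expo (lmv g)).

Definition syz_weights (F : seq 'cV[A]_m) : seq R :=
  [seq sigma_pow (gam F g) (lcv g) * cab (gam F g) (expo (lmv g)) | g <- F].

Definition is_syz (w b : seq R) : Prop :=
  size b = size w /\ \sum_(i < size w) b`_i * w`_i = 0.

Definition generates_syz (B : seq (seq R)) (w : seq R) : Prop :=
  (forall b, b \in B -> is_syz w b) /\
  forall b, is_syz w b -> exists c : seq R, size c = size B /\
    forall i, (i < size w)%N -> b`_i = \sum_(k < size B) c`_k * (nth [::] B k)`_i.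

Definition syz_sum (F : seq 'cV[A]_m) (b : seq R) : 'cV[A]_m :=
  \sum_(i < size F) (iota b`_i * xmon (gam F F`_i)) *: F`_i.

End PBW.

(* Main.v *)
Require Import Defs.
From HB Require Import structures.
From mathcomp Require Import all_boot all_order all_algebra.
From Stdlib Require Import ClassicalEpsilon Classical.
Set Implicit Arguments. Unset Strict Implicit. Unset Printing Implicit Defensive.
Import GRing.Theory.
Local Open Scope ring_scope.

Section Dev.
Variables (R A : nzRingType) (n m : nat) (iota : {rmorphism R -> A})
  (x : 'I_n -> A) (sigma : 'I_n -> R -> R) (cf : A -> exps n -> R)
  (ordA : rel (exps n)) (ordm : rel (exps n * 'I_m)).
Hypothesis Hli : mon_lin_indep iota x.
Hypothesis Hcr : coord_repr iota x cf.

Local Notation xm := (xmon x).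

Lemma sum_supp (u v : seq (exps n)) (F : exps n -> A) (P : pred (exps n)) :
  uniq u -> uniq v -> (forall a, ~~ P a -> F a = 0) ->
  (forall a, P a -> a \in u) -> (forall a, P a -> a \in v) ->
  \sum_(a <- u) F a = \sum_(a <- v) F a.
Proof.
move=> uu uv F0 Pu Pv.
rewrite -(big_rmcond _ _ F0) -(big_rmcond _ v F0) -big_filter -[RHS]big_filter.
apply: perm_big; apply: uniq_perm; rewrite ?filter_uniq // => a.
rewrite !mem_filter; case Pa: (P a) => //=; by rewrite (Pu _ Pa) (Pv _ Pa).
Qed.

Lemma expand (p : A) u : uniq u -> (forall a, cf p a != 0 -> a \in u) ->
  p = \sum_(a <- u) iota (cf p a) * xm a.
Proof.
move=> uu Su; have [s [us Ss ep]] := Hcr p; rewrite {1}ep.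
apply: (@sum_supp s u _ (fun a => cf p a != 0)) => //.
by move=> a; rewrite negbK => /eqP->; rewrite rmorph0 mul0r.
Qed.

Lemma coefU (s : seq (exps n)) (r : exps n -> R) (p : A) : uniq s ->
  p = \sum_(a <- s) iota (r a) * xm a -> forall b, cf p b = if b \in s then r b else 0.
Proof.
move=> us ep b; have [s' [us' Ss ep']] := Hcr p.
set u := undup (s ++ s').
have uu : uniq u by rewrite undup_uniq.
pose r0 a := if a \in s then r a else 0.
have e1 : \sum_(a <- u) iota (r0 a) * xm a = p.
  rewrite ep; transitivity (\sum_(a <- s) iota (r0 a) * xm a).
    apply: (@sum_supp u s _ (fun a => a \in s)) => //.
    - by move=> a /negbTE Ha; rewrite /r0 Ha rmorph0 mul0r.
    - by move=> a Ha; rewrite mem_undup mem_cat Ha.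
  by apply: eq_big_seq => a Ha; rewrite /r0 Ha.
have e2 : \sum_(a <- u) iota (cf p a) * xm a = p.
  by rewrite -expand // => a Ha; rewrite mem_undup mem_cat (Ss _ Ha) orbT.
have e3 : \sum_(a <- u) iota (r0 a - cf p a) * xm a = 0.
  rewrite (eq_bigr (fun a => iota (r0 a) * xm a - iota (cf p a) * xm a)).
    by rewrite sumrB e1 e2 subrr.
  by move=> a _; rewrite rmorphB mulrBl.
have z := Hli uu e3.
case/boolP: (b \in u) => bu.
  by have /eqP := z b bu; rewrite subr_eq0 /r0 => /eqP <-.
have bs : b \notin s by apply: contra bu => bs; rewrite mem_undup mem_cat bs.
rewrite (negbTE bs); apply/eqP; apply: contraR bu => /Ss bs'.
by rewrite mem_undup mem_cat bs' orbT.
Qed.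

Lemma cf_add p q b : cf (p + q) b = cf p b + cf q b.
Proof.
have [sp [usp Sp _]] := Hcr p; have [sq [usq Sq _]] := Hcr q.
set u := undup (sp ++ sq).
have uu : uniq u by rewrite undup_uniq.
have ep := @expand p u uu (fun a Ha => ltac:(by rewrite mem_undup mem_cat (Sp _ Ha))).
have eq := @expand q u uu (fun a Ha => ltac:(by rewrite mem_undup mem_cat (Sq _ Ha) orbT)).
have e : p + q = \sum_(a <- u) iota (cf p a + cf q a) * xm a.
  by rewrite {1}ep {1}eq -big_split; apply: eq_bigr => a _; rewrite rmorphD mulrDl.
rewrite (coefU uu e); case: ifP => // /negbT bu.
have hp : cf p b = 0 by apply/eqP; apply: contraR bu => /Sp H; rewrite mem_undup mem_cat H.
have hq : cf q b = 0 by apply/eqP; apply: contraR bu => /Sq H; rewrite mem_undup mem_cat H orbT.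
by rewrite hp hq addr0.
Qed.

Lemma cf0 b : cf 0 b = 0.
Proof. by apply: (addrI (cf 0 b)); rewrite -cf_add !addr0. Qed.

Lemma cf_opp p b : cf (- p) b = - cf p b.
Proof. by apply: (addrI (cf p b)); rewrite -cf_add !subrr cf0. Qed.

Lemma cf_sub p q b : cf (p - q) b = cf p b - cf q b.
Proof. by rewrite cf_add cf_opp. Qed.

Lemma cf_sum I (s : seq I) (P : pred I) (F : I -> A) b :
  cf (\sum_(i <- s | P i) F i) b = \sum_(i <- s | P i) cf (F i) b.
Proof. exact: (big_morph (fun p => cf p b) (fun p q => cf_add p q b) (cf0 b)). Qed.

Lemma cf_iotaM r p b : cf (iota r * p) b = r * cf p b.
Proof.
have [sp [usp Sp ep]] := Hcr p.
have e : iota r * p = \sum_(a <- sp) iota (r * cf p a) * xm a.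
  by rewrite {1}ep mulr_sumr; apply: eq_bigr => a _; rewrite rmorphM mulrA.
rewrite (coefU usp e); case: ifP => // /negbT bu.
have -> : cf p b = 0 by apply/eqP; apply: contraR bu => /Sp.
by rewrite mulr0.
Qed.

Lemma cf_iota_xm r a b : cf (iota r * xm a) b = if b == a then r else 0.
Proof.
have e : iota r * xm a = \sum_(a' <- [:: a]) iota r * xm a' by rewrite big_seq1.
by rewrite (coefU (r := fun _ => r) _ e) // mem_seq1.
Qed.

Lemma cf_xm a b : cf (xm a) b = if b == a then 1 else 0.
Proof. by rewrite -(mul1r (xm a)) -(rmorph1 iota) cf_iota_xm. Qed.

Lemma cf_eq0 p : (forall a, cf p a = 0) -> p = 0.
Proof.
move=> H; have [sp [usp Sp ep]] := Hcr p; rewrite ep big1 // => a _.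
by rewrite H rmorph0 mul0r.
Qed.


Hypothesis Hqc1 : forall i r, x i * iota r = iota (sigma i r) * x i.
Hypothesis Hqc2 : forall i j, exists c : R, [/\ c != 0, x j * x i = iota c * (x i * x j) &
      ((i < j)%N -> exists d, c * d = 1 /\ d * c = 1)].
Hypothesis Hbij : forall i, bijective (sigma i).

Definition isu (c : R) := exists d, c * d = 1 /\ d * c = 1.
Lemma isu1 : isu 1. Proof. by exists 1; rewrite mulr1. Qed.
Lemma isuM a b : isu a -> isu b -> isu (a * b).
Proof.
move=> [d [h1 h2]] [e [k1 k2]]; exists (e * d); split.
  by rewrite mulrA -(mulrA a) k1 mulr1 h1.
by rewrite mulrA -(mulrA e) h2 mulr1 k2.
Qed.
Lemma isu_neq0 a : isu a -> a != 0.
Proof. by move=> [d [h _]]; apply/eqP => a0; move: h; rewrite a0 mul0r => /eqP; rewrite eq_sym oner_eq0. Qed.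

Definition ue (i : 'I_n) : exps n := [ffun k => nat_of_bool (k == i)].

Lemma xm_ue i : xm (ue i) = x i.
Proof.
rewrite /xmon (eq_bigr (fun j => if j == i then x i else 1)).
  by rewrite -big_mkcond big_pred1_eq.
by move=> j _; rewrite ffunE; case: eqP => [->|]; rewrite ?expr1 ?expr0.
Qed.

Lemma cancel_x i u v : iota u * x i = iota v * x i -> u = v.
Proof. by rewrite -xm_ue => /(congr1 (fun p => cf p (ue i))); rewrite !cf_iota_xm eqxx. Qed.

Lemma sigmaD i a b : sigma i (a + b) = sigma i a + sigma i b.
Proof. by apply: (@cancel_x i); rewrite -Hqc1 rmorphD mulrDr !Hqc1 -mulrDl rmorphD. Qed.
Lemma sigmaM i a b : sigma i (a * b) = sigma i a * sigma i b.
Proof. by apply: (@cancel_x i); rewrite -Hqc1 rmorphM mulrA !Hqc1 -mulrA Hqc1 mulrA rmorphM. Qed.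
Lemma sigma1 i : sigma i 1 = 1.
Proof. by apply: (@cancel_x i); rewrite -Hqc1 rmorph1 mulr1 mul1r. Qed.
Lemma sigma0 i : sigma i 0 = 0.
Proof. by apply: (addrI (sigma i 0)); rewrite -sigmaD !addr0. Qed.
Lemma isu_sigma i a : isu a -> isu (sigma i a).
Proof. by move=> [d [h1 h2]]; exists (sigma i d); rewrite -!sigmaM h1 h2 sigma1. Qed.

Lemma xpow_comm i k r : x i ^+ k * iota r = iota (iter k (sigma i) r) * x i ^+ k.
Proof.
elim: k => [|k IH]; first by rewrite !expr0 mul1r mulr1.
by rewrite exprS -mulrA IH mulrA Hqc1 -mulrA.
Qed.

Definition spw (l : seq 'I_n) (a : exps n) (r : R) : R :=
  foldr (fun i acc => iter (a i) (sigma i) acc) r l.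
Definition xw (l : seq 'I_n) (a : exps n) : A := \prod_(i <- l) x i ^+ a i.

Lemma xw_comm l a r : xw l a * iota r = iota (spw l a r) * xw l a.
Proof.
elim: l r => [|i l IH] r; first by rewrite /xw big_nil mul1r mulr1.
by rewrite /xw big_cons -mulrA -/(xw l a) IH mulrA xpow_comm -mulrA.
Qed.

Lemma xm_xw a : xm a = xw (enum 'I_n) a.
Proof. by rewrite /xmon /xw enumT. Qed.

Lemma sp_spw a r : sigma_pow sigma a r = spw (enum 'I_n) a r.
Proof. by []. Qed.

Lemma xm_comm a r : xm a * iota r = iota (sigma_pow sigma a r) * xm a.
Proof. by rewrite xm_xw xw_comm. Qed.

Lemma iter_prop (P : R -> R -> Prop) (f : R -> R) k :
  (forall a, P a a) -> (forall a b, P a b -> P (f a) (f b)) -> forall a b, P a b -> P (iter k f a) (iter k f b).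
Proof. move=> _ Hf a b Hab; elim: k => //= k IH; exact: Hf. Qed.

Lemma spwD l a r s : spw l a (r + s) = spw l a r + spw l a s.
Proof.
elim: l => //= i l ->; elim: (a i) => //= k ->; exact: sigmaD.
Qed.
Lemma spwM l a r s : spw l a (r * s) = spw l a r * spw l a s.
Proof.
elim: l => //= i l ->; elim: (a i) => //= k ->; exact: sigmaM.
Qed.
Lemma spw1 l a : spw l a 1 = 1.
Proof. elim: l => //= i l ->; elim: (a i) => //= k ->; exact: sigma1. Qed.
Lemma spw0 l a : spw l a 0 = 0.
Proof. elim: l => //= i l ->; elim: (a i) => //= k ->; exact: sigma0. Qed.
Lemma spw_isu l a r : isu r -> isu (spw l a r).
Proof. move=> [d [h1 h2]]; exists (spw l a d); by rewrite -!spwM h1 h2 spw1. Qed.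
Lemma spw_inj l a : injective (spw l a).
Proof.
move=> r s; elim: l r s => [//|i l IH] r s /= H; apply: IH; move: H.
move: (spw l a r) (spw l a s) => t u.
elim: (a i) => [//|k IHk H]; apply: IHk; exact: (bij_inj (Hbij i)).
Qed.
Lemma spw_surj l a y : exists r, spw l a r = y.
Proof.
elim: l y => [|i l IH] y; first by exists y.
suff [z hz] : exists z, iter (a i) (sigma i) z = y.
  by have [r hr] := IH z; exists r; rewrite /= hr.
elim: (a i) y => [|k IHk] y; first by exists y.
have [g _ hg] := Hbij i.
have [z hz] := IHk (g y); exists z; by rewrite iterS hz hg.
Qed.

Lemma xpow_swap (i j : 'I_n) (k : nat) : (i < j)%N ->
  exists c, isu c /\ x j ^+ k * x i = iota c * (x i * x j ^+ k).
Proof.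
move=> ij; have [c0 [_ e0 /(_ ij) u0]] := Hqc2 i j.
elim: k => [|k [c [uc e]]]; first by exists 1; rewrite !expr0 rmorph1 mul1r mulr1 mul1r; split=> //; exact: isu1.
exists (sigma j c * c0); split; first by apply: isuM => //; exact: isu_sigma.
rewrite exprS -mulrA e mulrA Hqc1 -mulrA (mulrA (x j)) e0.
by rewrite rmorphM !mulrA.
Qed.

Definition ltI (a b : 'I_n) := (a < b)%N.

Lemma xw_swap l e i : all (ltI i) l ->
  exists c, isu c /\ xw l e * x i = iota c * (x i * xw l e).
Proof.
elim: l => [|j l IH] /=.
  by move=> _; exists 1; rewrite /xw big_nil rmorph1 mul1r mulr1 mul1r; split=> //; exact: isu1.
case/andP=> ij /IH [c [uc ec]].
have [c' [uc' ec']] := xpow_swap (e j) ij.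
exists (iter (e j) (sigma j) c * c'); split.
  by apply: isuM => //; elim: (e j) => //= k Hk; exact: isu_sigma.
rewrite /xw big_cons -/(xw l e) -mulrA ec mulrA xpow_comm -mulrA mulrA.
by rewrite -mulrA (mulrA (x j ^+ e j)) ec' rmorphM !mulrA.
Qed.

Lemma xw_x l e i : sorted ltI l -> i \in l ->
  exists c, isu c /\ xw l e * x i = iota c * xw l (eadd e (ue i)).
Proof.
elim: l => [|j l IH] //= Hs; rewrite inE; case: eqP => [-> _|ij /= il].
  have al : all (ltI j) l by apply: order_path_min => //; exact: ltn_trans.
  have [c [uc ec]] := xw_swap e al.
  exists (iter (e j) (sigma j) c); split; first by elim: (e j) => //= k Hk; exact: isu_sigma.
  rewrite /xw !big_cons -!/(xw l _) -mulrA ec mulrA xpow_comm -mulrA (mulrA (x j ^+ _)) -exprSr.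
  congr (_ * (_ * _)); first by rewrite ffunE ffunE eqxx addn1.
  apply: eq_big_seq => k kl; rewrite ffunE ffunE.
  have : (j < k)%N by move/allP: al => /(_ _ kl).
  by case: eqP => [->|]; rewrite ?ltnn ?addn0.
have [c [uc ec]] := IH (path_sorted Hs) il.
exists (iter (e j) (sigma j) c); split; first by elim: (e j) => //= k Hk; exact: isu_sigma.
rewrite /xw !big_cons -!/(xw l _) -mulrA ec mulrA xpow_comm -mulrA.
rewrite ffunE ffunE; case: eqP => [ji|]; first by case: ij.
by rewrite addn0.
Qed.

Lemma sorted_enum : sorted ltI (enum 'I_n).
Proof. by have := iota_ltn_sorted 0 n; rewrite -val_enum_ord sorted_map. Qed.

Lemma xm_x e i : exists c, isu c /\ xm e * x i = iota c * xm (eadd e (ue i)).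
Proof. by rewrite !xm_xw; apply: xw_x; [exact: sorted_enum | rewrite mem_enum]. Qed.

Lemma xm_xpow e i k : exists c, isu c /\
  xm e * x i ^+ k = iota c * xm [ffun j => (e j + (if j == i then k else 0))%N].
Proof.
elim: k => [|k [c [uc ec]]].
  exists 1; split; first exact: isu1.
  rewrite expr0 mulr1 rmorph1 mul1r; congr (xm _); apply/ffunP => j.
  by rewrite ffunE; case: eqP; rewrite addn0.
have [c' [uc' ec']] := xm_x [ffun j => (e j + (if j == i then k else 0))%N] i.
exists (c * c'); split; first exact: isuM.
rewrite exprSr mulrA ec -mulrA ec' mulrA rmorphM; congr (_ * xm _).
apply/ffunP => j; rewrite !ffunE; case: (j == i) => /=; [by rewrite addn1 addnS | by rewrite !addn0].
Qed.

Lemma xm_xw_gen l a b : uniq l -> exists c, isu c /\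
  xm a * xw l b = iota c * xm [ffun k => (a k + (if k \in l then b k else 0))%N].
Proof.
elim: l a => [|j l IH] a /=.
  move=> _; exists 1; split; first exact: isu1.
  rewrite /xw big_nil mulr1 rmorph1 mul1r; congr (xm _); apply/ffunP => j.
  by rewrite ffunE addn0.
case/andP=> jl ul.
have [c [uc ec]] := xm_xpow a j (b j).
have [c' [uc' ec']] := IH [ffun k => (a k + (if k == j then b j else 0))%N] ul.
exists (c * c'); split; first exact: isuM.
rewrite /xw big_cons -/(xw l b) mulrA ec -mulrA ec' mulrA rmorphM; congr (_ * xm _).
apply/ffunP => k; rewrite !ffunE inE; case: eqP => [->|_] /=.
  by rewrite (negbTE jl) addn0.
by rewrite addn0.
Qed.

Lemma xm_mul a b : exists c, isu c /\ xm a * xm b = iota c * xm (eadd a b).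
Proof.
rewrite [xm b]xm_xw; have [c [uc ec]] := xm_xw_gen a b (enum_uniq 'I_n).
exists c; split=> //; rewrite ec; congr (_ * xm _).
by apply/ffunP => k; rewrite !ffunE mem_enum.
Qed.

Lemma cab_spec a b : isu (cab x cf a b) /\ xm a * xm b = iota (cab x cf a b) * xm (eadd a b).
Proof.
have [c [uc ec]] := xm_mul a b.
have -> : cab x cf a b = c by rewrite /cab ec cf_iota_xm eqxx.
by [].
Qed.


Definition dle (a b : exps n) := [forall k, (a k <= b k)%N].
Lemma esub_eadd (a c : exps n) : esub (eadd a c) a = c.
Proof. by apply/ffunP => k; rewrite !ffunE addKn. Qed.
Lemma eadd_esub (a b : exps n) : dle a b -> eadd a (esub b a) = b.
Proof. by move/forallP => H; apply/ffunP => k; rewrite !ffunE subnKC. Qed.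
Lemma eadd_inj (a : exps n) : injective (eadd a).
Proof. exact: (can_inj (g := fun c => esub c a) (esub_eadd a)). Qed.
Lemma dle_eadd (a c : exps n) : dle a (eadd a c).
Proof. by apply/forallP => k; rewrite ffunE leq_addr. Qed.

Lemma cf_mulx (r : R) (a : exps n) (p : A) (b : exps n) : cf (iota r * xm a * p) b =
  if dle a b then r * sigma_pow sigma a (cf p (esub b a)) * cab x cf a (esub b a) else 0.
Proof.
have [sp [usp Sp ep]] := Hcr p.
pose G b' := r * sigma_pow sigma a (cf p (esub b' a)) * cab x cf a (esub b' a).
have e : iota r * xm a * p = \sum_(b' <- map (eadd a) sp) iota (G b') * xm b'.
  rewrite big_map {1}ep mulr_sumr; apply: eq_bigr => c _; rewrite /G esub_eadd.
  have [_ ec] := cab_spec a c.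
  by rewrite -mulrA (mulrA (xm a)) xm_comm -!mulrA ec !rmorphM !mulrA.
rewrite (coefU _ e); last by rewrite map_inj_uniq //; exact: eadd_inj.
case: ifP => [bm|/negbT bm]; case: ifP => // dab.
- by move: bm dab => /mapP [c _ ->]; rewrite dle_eadd.
- have : esub b a \notin sp by apply: contra bm => H; rewrite -(eadd_esub dab) map_f.
  move=> /negP H; have -> : cf p (esub b a) = 0 by apply/eqP/negPn/negP => /Sp /H.
  by rewrite sp_spw spw0 mulr0 mul0r.
Qed.

Lemma cfv_mulx (r : R) (a : exps n) (v : 'cV[A]_m) b j : cfv cf ((iota r * xm a) *: v) (b, j) =
  if dle a b then r * sigma_pow sigma a (cfv cf v (esub b a, j)) * cab x cf a (esub b a) else 0.
Proof. by rewrite /cfv /= mxE cf_mulx. Qed.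

Hypothesis HoA : monorderA x cf ordA.
Hypothesis HoV : monorderV x cf ordA ordm.

Lemma ordA_refl : reflexive ordA.
Proof. by case: HoA => [[]]. Qed.
Lemma ordm_refl : reflexive ordm.
Proof. by case: HoV => [[]]. Qed.
Lemma ordm_anti (X Y : vmon n m) : ordm X Y -> ordm Y X -> X = Y.
Proof. by case: HoV => [[_ H _ _]] _ _ _ h1 h2; apply: H; rewrite h1 h2. Qed.
Lemma ordm_trans (X Y Z : vmon n m) : ordm X Y -> ordm Y Z -> ordm X Z.
Proof. by case: HoV => [[_ _ H _]] _ _ _ h1 h2; apply: (H Y). Qed.
Lemma ordm_total (X Y : vmon n m) : ordm X Y || ordm Y X.
Proof. by case: HoV => [[_ _ _ H]]. Qed.
Lemma ordm_deg (X Y : vmon n m) : (edeg Y.1 < edeg X.1)%N -> ordm X Y.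
Proof. by case: HoV => _ _ _ H; apply: H. Qed.

Lemma lmA_mul (a b : exps n) : lmA cf ordA (xm a * xm b) = Some (eadd a b).
Proof.
have [uc ec] := cab_spec a b.
set P := (fun o : option (exps n) => match o with
   | Some a0 => cf (xm a * xm b) a0 != 0 /\ (forall b0, cf (xm a * xm b) b0 != 0 -> ordA a0 b0)
   | None => xm a * xm b = 0 end).
have nz : forall b0, cf (xm a * xm b) b0 != 0 -> b0 = eadd a b.
  by move=> b0; rewrite ec cf_iota_xm; case: (b0 =P eadd a b) => // _; rewrite eqxx.
have hP : P (Some (eadd a b)).
  split; first by rewrite ec cf_iota_xm eqxx isu_neq0.
  by move=> b0 /nz ->; exact: ordA_refl.
have := epsilon_spec (inhabits None) P (ex_intro _ _ hP).
rewrite /lmA -/P; case: (epsilon _ _) => [a0 [h _]|h]; first by rewrite (nz _ h).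
by move: hP => [+ _]; rewrite h cf0 eqxx.
Qed.

Lemma shift_le (a : exps n) (Z Y : vmon n m) : ordm Z Y -> ordm (eadd a Z.1, Z.2) (eadd a Y.1, Y.2).
Proof.
case: Z Y => [z j] [y i] /= h; case: HoV => _ _ H _.
by have := H y z a i j h; rewrite !lmA_mul.
Qed.

Lemma max_seq (L : seq (vmon n m)) : L != [::] ->
  exists2 X, X \in L & forall Y, Y \in L -> ordm X Y.
Proof.
elim: L => // a L IH _; case: (altP (L =P [::])) => [->|/IH [X XL HX]].
  by exists a; rewrite ?mem_seq1 // => Y; rewrite mem_seq1 => /eqP ->; exact: ordm_refl.
case/orP: (ordm_total a X) => h.
  exists a; first by rewrite inE eqxx.
  by move=> Y; rewrite inE => /orP [/eqP ->|/HX]; [exact: ordm_refl | exact: ordm_trans].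
exists X; first by rewrite inE XL orbT.
by move=> Y; rewrite inE => /orP [/eqP ->|/HX].
Qed.

Lemma supp_fin (f : 'cV[A]_m) : exists L : seq (vmon n m), forall X, cfv cf f X != 0 -> X \in L.
Proof.
have [s Hs] : exists s : 'I_m -> seq (exps n), forall j a, cf (f j ord0) a != 0 -> a \in s j.
  apply: (fin_all_exists (P := fun j s => forall a, cf (f j ord0) a != 0 -> a \in s)).
  by move=> j; have [s [_ H _]] := Hcr (f j ord0); exists s.
exists (flatten [seq [seq (a, j) | a <- s j] | j <- enum 'I_m]) => [[a j]] /= H.
apply/flatten_mapP; exists j; first by rewrite mem_enum.
by apply: map_f; apply: Hs.
Qed.

Lemma nz_supp (f : 'cV[A]_m) : f != 0 -> exists X, cfv cf f X != 0.
Proof.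
move=> fn; apply: NNPP => H; move/eqP: fn; apply; apply/matrixP => j k.
rewrite [k]ord1 mxE; apply: cf_eq0 => a; apply/eqP/negPn/negP => Ha.
by apply: H; exists (a, j).
Qed.

Lemma lmv_spec (f : 'cV[A]_m) : f != 0 -> exists X,
  [/\ lmv cf ordm f = Some X, cfv cf f X != 0 & forall Y, cfv cf f Y != 0 -> ordm X Y].
Proof.
move=> fn; have [L HL] := supp_fin f; have [X0 HX0] := nz_supp fn.
have ne : [seq Y <- L | cfv cf f Y != 0] != [::].
  apply/eqP => H; have : X0 \in [seq Y <- L | cfv cf f Y != 0] by rewrite mem_filter HX0 HL.
  by rewrite H.
have [X XL HX] := max_seq ne.
  move: XL; rewrite mem_filter => /andP [Xn _].
  set P := (fun o : option (vmon n m) => match o with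
    | None => f = 0
    | Some X => cfv cf f X != 0 /\ (forall Y, cfv cf f Y != 0 -> ordm X Y) end).
  have hP : P (Some X) by split=> // Y hY; apply: HX; rewrite mem_filter hY HL.
  have := epsilon_spec (inhabits None) P (ex_intro _ _ hP).
  rewrite /lmv -/P; case: (epsilon _ _) => [X' [h1 h2]|h]; first by exists X'.
  by move/eqP: fn.
Qed.

Lemma lmv0 : lmv cf ordm (0 : 'cV[A]_m) = None.
Proof.
set P := (fun o : option (vmon n m) => match o with
    | None => (0 : 'cV[A]_m) = 0
    | Some X => cfv cf (0 : 'cV[A]_m) X != 0 /\ (forall Y, cfv cf (0 : 'cV[A]_m) Y != 0 -> ordm X Y) end).
have := epsilon_spec (inhabits None) P (ex_intro _ None (erefl _)).
rewrite /lmv -/P; case: (epsilon _ _) => // X [+ _].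
by rewrite /cfv mxE cf0 eqxx.
Qed.

Lemma lmvP (f : 'cV[A]_m) X : lmv cf ordm f = Some X ->
  f != 0 /\ lcv cf ordm f = cfv cf f X /\ cfv cf f X != 0 /\ forall Y, cfv cf f Y != 0 -> ordm X Y.
Proof.
case: (altP (f =P 0)) => [->|fn]; first by rewrite lmv0.
have [X' [h1 h2 h3]] := lmv_spec fn; rewrite h1 => -[<-].
by rewrite /lcv h1.
Qed.

Lemma cfv_lm (f : 'cV[A]_m) Y : cfv cf f Y != 0 -> exists X, lmv cf ordm f = Some X /\ ordm X Y.
Proof.
move=> hY; have fn : f != 0 by apply: contraNneq hY => ->; rewrite /cfv mxE cf0.
by have [X [h1 _ h3]] := lmv_spec fn; exists X; split=> //; apply: h3.
Qed.


Lemma cfvD (f g : 'cV[A]_m) X : cfv cf (f + g) X = cfv cf f X + cfv cf g X.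
Proof. by rewrite /cfv mxE cf_add. Qed.
Lemma cfvN (f : 'cV[A]_m) X : cfv cf (- f) X = - cfv cf f X.
Proof. by rewrite /cfv mxE cf_opp. Qed.
Lemma cfvB (f g : 'cV[A]_m) X : cfv cf (f - g) X = cfv cf f X - cfv cf g X.
Proof. by rewrite cfvD cfvN. Qed.
Lemma cfv0 X : cfv cf (0 : 'cV[A]_m) X = 0.
Proof. by rewrite /cfv mxE cf0. Qed.
Lemma cfv_sum I (s : seq I) (P : pred I) (F : I -> 'cV[A]_m) X :
  cfv cf (\sum_(i <- s | P i) F i) X = \sum_(i <- s | P i) cfv cf (F i) X.
Proof. exact: (big_morph (fun f => cfv cf f X) (fun f g => cfvD f g X) (cfv0 X)). Qed.

Lemma sum_nz (I : eqType) (s : seq I) (F : I -> R) : \sum_(i <- s) F i != 0 -> exists2 i, i \in s & F i != 0.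
Proof.
move=> H; apply: NNPP => H'; move/eqP: H; apply; rewrite big1_seq // => i /andP [_ Hi].
by apply/eqP/negPn/negP => Fi; apply: H'; exists i.
Qed.

Lemma eadd_esub' (a b : exps n) : dle a b -> eadd (esub b a) a = b.
Proof. by move/forallP => H; apply/ffunP => k; rewrite !ffunE subnK. Qed.

Definition tv (t : R * exps n * 'cV[A]_m) : 'cV[A]_m := (iota t.1.1 * xm t.1.2) *: t.2.

Lemma cfv_term_nz r a (v : 'cV[A]_m) b j : cfv cf ((iota r * xm a) *: v) (b, j) != 0 ->
  exists2 c, b = eadd a c & cfv cf v (c, j) != 0.
Proof.
rewrite cfv_mulx; case: ifP => [dab H|]; last by rewrite eqxx.
exists (esub b a); first by rewrite eadd_esub.
by apply: contraNneq H => ->; rewrite sp_spw spw0 mulr0 mul0r.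
Qed.


Lemma term_bound (r : R) (a : exps n) (v : 'cV[A]_m) (Z : vmon n m) :
  (forall Y, cfv cf v Y != 0 -> ordm Z Y) ->
  forall Y, cfv cf ((iota r * xm a) *: v) Y != 0 -> ordm (eadd a Z.1, Z.2) Y.
Proof. by move=> H [b j] /cfv_term_nz [c -> hc]; apply: (shift_le a (H _ hc)). Qed.

Lemma term_sbound (r : R) (a : exps n) (v : 'cV[A]_m) (Z : vmon n m) :
  (forall Y, cfv cf v Y != 0 -> ordm Z Y && (Y != Z)) ->
  forall Y, cfv cf ((iota r * xm a) *: v) Y != 0 -> ordm (eadd a Z.1, Z.2) Y && (Y != (eadd a Z.1, Z.2)).
Proof.
case: Z => z1 z2 H [b j] /cfv_term_nz [c -> hc]; case/andP: (H _ hc) => h1 h2.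
rewrite (shift_le a h1) /=; apply: contra h2 => /eqP [/eadd_inj -> ->]; exact: eqxx.
Qed.

Lemma term_top (r : R) (a : exps n) (v : 'cV[A]_m) c j :
  cfv cf ((iota r * xm a) *: v) (eadd a c, j) = r * sigma_pow sigma a (cfv cf v (c, j)) * cab x cf a c.
Proof. by rewrite cfv_mulx dle_eadd esub_eadd. Qed.

Definition hgt (t : R * exps n * 'cV[A]_m) (X : vmon n m) :=
  exists Z, lmv cf ordm t.2 = Some Z /\ ordm X (eadd t.1.2 Z.1, Z.2).
Definition hgt_eq (t : R * exps n * 'cV[A]_m) (X : vmon n m) :=
  exists Z, lmv cf ordm t.2 = Some Z /\ (eadd t.1.2 Z.1, Z.2) = X.

Lemma tv_bound t X : hgt t X -> forall Y, cfv cf (tv t) Y != 0 -> ordm X Y.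
Proof.
move=> [Z [hZ hX]] Y hY; have [_ [_ [_ h4]]] := lmvP hZ.
exact: (ordm_trans hX (term_bound h4 hY)).
Qed.

Lemma red1_info (G : seq 'cV[A]_m) f h : all (fun g => g != 0) G ->
  red1 iota x sigma cf ordm G f h -> f != 0 ->
  exists X ts, [/\ lmv cf ordm f = Some X, h = f - \sum_(t <- ts) tv t,
   (forall t, t \in ts -> t.2 \in G /\ hgt_eq t X) & cfv cf h X = 0].
Proof.
move=> HG [[-> _]|[_ [L]]]; first by rewrite eqxx.
rewrite /=; case=> HL HD Hl Hh fn.
have [[xi i] [hX _ _]] := lmv_spec fn.
pose ts := [seq (p.2, esub xi (expo (lmv cf ordm p.1)), p.1) | p <- L].
have info : forall p, p \in L -> exists beta, [/\ p.1 \in G, lmv cf ordm p.1 = Some (beta, i) & dle beta xi].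
  move=> p pL; have pG : p.1 \in G by move/allP: HL => /(_ _ pL).
  have pn : p.1 != 0 by move/allP: HG => /(_ _ pG).
  have [[beta j] [hb _ _]] := lmv_spec pn.
  move/allP: HD => /(_ _ pL); rewrite hb hX /= => /andP [/eqP -> hd].
  by exists beta; split.
exists (xi, i), ts; split => //.
- by rewrite Hh /ts big_map hX.
- move=> t /mapP [p pL ->] /=; have [beta [pG hb hd]] := info p pL.
  split=> //; exists (beta, i); split=> //; by rewrite hb /= eadd_esub'.
rewrite Hh cfvB cfv_sum -(proj1 (proj2 (lmvP hX))) Hl hX /=.
apply/eqP; rewrite subr_eq0; apply/eqP; apply: eq_big_seq => p pL.
have [beta [pG hb hd]] := info p pL.
rewrite hb /= -[X in cfv _ _ (X, i)](eadd_esub' hd) term_top.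
by rewrite (proj1 (proj2 (lmvP hb))).
Qed.


Definition FT (d : nat) := ({ffun 'I_n -> 'I_d.+1} * 'I_m)%type.
Definition emb d (Z : FT d) : vmon n m := ([ffun k => val (Z.1 k)], Z.2).
Definition below d (X : vmon n m) := [pred Z : FT d | ordm X (emb Z) && (emb Z != X)].

Lemma comp_le_deg (a : exps n) k : (a k <= edeg a)%N.
Proof. by rewrite /edeg (bigD1 k) //= leq_addr. Qed.

Lemma wf_vmon (P : vmon n m -> Prop) :
  (forall X, (forall Y, ordm X Y -> Y != X -> P Y) -> P X) -> forall X, P X.
Proof.
move=> HP.
suff H : forall d X, edeg X.1 = d -> P X by move=> X; exact: (H _ X erefl).
elim/ltn_ind => d IHd.
suff H : forall k X, edeg X.1 = d -> #|below d X| = k -> P X by move=> X hX; exact: (H _ X hX erefl).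
elim/ltn_ind => k IHk X hd hk; apply: HP => Y hXY hYX.
have hYd : (edeg Y.1 <= d)%N.
  rewrite leqNgt; apply/negP => hlt; rewrite -hd in hlt.
  by move/eqP: hYX; apply; apply: ordm_anti => //; exact: ordm_deg.
case: (ltnP (edeg Y.1) d) => [hlt|hge]; first exact: (IHd _ hlt Y erefl).
have eYd : edeg Y.1 = d by apply/eqP; rewrite eqn_leq hYd hge.
apply: (IHk #|below d Y| _ Y eYd erefl); rewrite -hk; apply: proper_card.
apply/properP; split.
  apply/subsetP => Z; rewrite !inE => /andP [h1 h2].
  rewrite (ordm_trans hXY h1) /=; apply: contra h2 => /eqP h; rewrite h in h1.
  by rewrite h; apply/eqP; apply: ordm_anti.
have [pY epY] : exists pY : FT d, emb pY = Y.
  exists ([ffun l => inord (Y.1 l)], Y.2).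
  rewrite /emb /=; case: Y hXY hYX hYd eYd hge => [y j] /= _ _ _ eYd _.
  congr (_, _); apply/ffunP => l; rewrite !ffunE inordK //.
  by rewrite ltnS -eYd comp_le_deg.
by exists pY; rewrite !inE epY ?hXY ?hYX //= eqxx andbF.
Qed.


Lemma M_sum (M : 'cV[A]_m -> Prop) (I : eqType) (s : seq I) (F : I -> 'cV[A]_m) :
  is_submodule M -> (forall i, i \in s -> M (F i)) -> M (\sum_(i <- s) F i).
Proof.
move=> [M0 MD _] HF; rewrite big_seq; apply: (big_ind M) => // i; exact: HF.
Qed.

Lemma M_sub (M : 'cV[A]_m -> Prop) u v : is_submodule M -> M u -> M v -> M (u - v).
Proof.
move=> [M0 MD MZ] hu hv; apply: MD => //.
by rewrite -scaleN1r; apply: MZ.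
Qed.

Lemma hgt_eq_hgt t X : hgt_eq t X -> hgt t X.
Proof. by move=> [Z [h1 h2]]; exists Z; rewrite h2; split=> //; exact: ordm_refl. Qed.

Lemma forward (M : 'cV[A]_m -> Prop) (G : seq 'cV[A]_m) :
  is_submodule M -> is_groebner iota x sigma cf ordm M G ->
  forall f, M f -> red_plus iota x sigma cf ordm G f 0.
Proof.
move=> HM [_ HG0 HGM Hred] f Mf.
case: (altP (f =P 0)) => [->|fn]; first by apply: rp_one; left.
have [X [hX _ _]] := lmv_spec fn.
elim/wf_vmon: X f Mf fn hX => X IH f Mf fn hX.
have [_ [h hred]] := Hred f Mf fn.
have [X' [ts [hX' eh hG hz]]] := red1_info HG0 hred fn.
rewrite hX in hX'; case: hX' => <- in hG hz.
have Mh : M h.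
  rewrite eh; apply: M_sub => //; apply: M_sum => // t /hG [tG _].
  by case: HM => _ _ MZ; apply: MZ; apply: HGM.
case: (altP (h =P 0)) => [h0|hn]; first by apply: rp_one; rewrite -h0.
have [Y [hY hYn _]] := lmv_spec hn.
apply: (rp_step hred); apply: (IH Y) => //.
  move: hYn; rewrite eh cfvB; case: (altP (cfv cf f Y =P 0)) => [->|fY].
    rewrite sub0r oppr_eq0 cfv_sum => /sum_nz [t tts ht].
    by have [_ /hgt_eq_hgt hh] := hG t tts; exact: (tv_bound hh ht).
  by move=> _; exact: (proj2 (proj2 (proj2 (lmvP hX))) _ fY).
by apply: contraNneq hYn => ->; rewrite hz.
Qed.


Lemma sum_group (V : zmodType) (I K : eqType) (s : seq I) (F : seq K) (key : I -> K) (H : I -> V) :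
  uniq F -> (forall t, t \in s -> key t \in F) ->
  \sum_(t <- s) H t = \sum_(g <- F) \sum_(t <- s | key t == g) H t.
Proof.
move=> uF hF.
rewrite (eq_bigr (fun g => \sum_(t <- s) if key t == g then H t else 0)); last first.
  by move=> g _; rewrite big_mkcond.
rewrite exchange_big /=; apply: eq_big_seq => t ts.
rewrite -big_mkcond /= -big_filter (eq_filter (a2 := pred1 (key t))); last first.
  by move=> g; rewrite /= eq_sym.
by rewrite filter_pred1_uniq ?hF // big_seq1.
Qed.

Lemma esub_eadd' (a c : exps n) : esub (eadd a c) c = a.
Proof. by apply/ffunP => k; rewrite !ffunE addnK. Qed.
Lemma eaddA (a b c : exps n) : eadd (eadd a b) c = eadd a (eadd b c).
Proof. by apply/ffunP => k; rewrite !ffunE addnA. Qed.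
Lemma dle_trans (a b c : exps n) : dle a b -> dle b c -> dle a c.
Proof. by move=> /forallP h1 /forallP h2; apply/forallP => k; exact: leq_trans (h1 k) (h2 k). Qed.
Lemma dle_refl (a : exps n) : dle a a.
Proof. by apply/forallP. Qed.
Lemma dle_eadd' (a c : exps n) : dle c (eadd a c).
Proof. by apply/forallP => k; rewrite ffunE leq_addl. Qed.

Lemma XF_foldl (i : 'I_m) (xi : exps n) (F' : seq 'cV[A]_m) (z : exps n) :
  (forall g, g \in F' -> exists beta, lmv cf ordm g = Some (beta, i) /\ dle beta xi) -> dle z xi ->
  exists z', [/\ foldl (fun acc h => mlcm acc (lmv cf ordm h)) (Some (z, i)) F' = Some (z', i),
     dle z z', dle z' xi & forall g beta, g \in F' -> lmv cf ordm g = Some (beta, i) -> dle beta z'].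
Proof.
elim: F' z => [|g F' IH] z hF hz /=.
  by exists z; split=> //; exact: dle_refl.
have [beta [hb hbx]] := hF g (mem_head _ _).
rewrite hb /= eqxx.
set z1 := [ffun k => maxn (z k) (beta k)].
have hz1 : dle z1 xi.
  apply/forallP => k; rewrite ffunE geq_max.
  by move/forallP: hz => ->; move/forallP: hbx => ->.
have hF' : forall g', g' \in F' -> exists beta, lmv cf ordm g' = Some (beta, i) /\ dle beta xi.
  by move=> g' hg'; apply: hF; rewrite inE hg' orbT.
have [z' [e1 e2 e3 e4]] := IH z1 hF' hz1.
have hzz : dle z z1 by apply/forallP => k; rewrite ffunE leq_maxl.
have hbz : dle beta z1 by apply/forallP => k; rewrite ffunE leq_maxr.
exists z'; split => //; first exact: dle_trans hzz e2.
move=> g' beta' /predU1P [->|hg'] hb'; last exact: e4 hg' hb'.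
by move: hb'; rewrite hb => -[<-]; exact: dle_trans hbz e2.
Qed.

Lemma XF_spec (F : seq 'cV[A]_m) (i : 'I_m) (xi : exps n) : F != [::] ->
  (forall g, g \in F -> exists beta, lmv cf ordm g = Some (beta, i) /\ dle beta xi) ->
  exists zeta, [/\ XF cf ordm F = Some (zeta, i), dle zeta xi &
     forall g beta, g \in F -> lmv cf ordm g = Some (beta, i) -> dle beta zeta].
Proof.
case: F => // g F' _ hF; have [beta [hb hbx]] := hF g (mem_head _ _).
have hF' : forall g', g' \in F' -> exists beta, lmv cf ordm g' = Some (beta, i) /\ dle beta xi.
  by move=> g' hg'; apply: hF; rewrite inE hg' orbT.
have [z' [e1 e2 e3 e4]] := XF_foldl hF' hbx.
exists z'; split => //; first by rewrite /XF hb.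
move=> g' beta' /predU1P [->|hg'] hb'; last exact: e4 hg' hb'.
by move: hb'; rewrite hb => -[<-].
Qed.


Definition hgtD (D : vmon n m -> Prop) (t : R * exps n * 'cV[A]_m) :=
  exists Z, lmv cf ordm t.2 = Some Z /\ D (eadd t.1.2 Z.1, Z.2).

Lemma red1_0 (G : seq 'cV[A]_m) h : red1 iota x sigma cf ordm G 0 h -> h = 0.
Proof. by case=> [[_ ->]|[]]; rewrite ?eqxx. Qed.

Lemma red1_bound (G : seq 'cV[A]_m) (D : vmon n m -> Prop) f g :
  all (fun g => g != 0) G -> (forall Y Y', D Y -> ordm Y Y' -> D Y') ->
  red1 iota x sigma cf ordm G f g -> f != 0 -> (forall Y, cfv cf f Y != 0 -> D Y) ->
  exists ts, [/\ (forall t, t \in ts -> t.2 \in G /\ hgtD D t), f = g + \sum_(t <- ts) tv t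
     & forall Y, cfv cf g Y != 0 -> D Y].
Proof.
move=> HG hD hr fn hf.
have [X [ts [hX eg hts hz]]] := red1_info HG hr fn.
have [_ [_ [hX1 hX2]]] := lmvP hX.
have DX := hf _ hX1.
exists ts; split.
- move=> t tts; have [tG [Z [hZ hZX]]] := hts t tts; split=> //.
  by exists Z; split=> //; rewrite hZX.
- by rewrite eg subrK.
move=> Y; rewrite eg cfvB; case: (altP (cfv cf f Y =P 0)) => [->|fY]; last by move=> _; exact: hf.
rewrite sub0r oppr_eq0 cfv_sum => /sum_nz [t tts ht].
have [_ /hgt_eq_hgt hh] := hts t tts.
exact: hD _ _ DX (tv_bound hh ht).
Qed.

Lemma rp_rep (G : seq 'cV[A]_m) (D : vmon n m -> Prop) s h :
  all (fun g => g != 0) G -> (forall Y Y', D Y -> ordm Y Y' -> D Y') ->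
  red_plus iota x sigma cf ordm G s h -> h = 0 -> (forall Y, cfv cf s Y != 0 -> D Y) ->
  exists ts, (forall t, t \in ts -> t.2 \in G /\ hgtD D t) /\ s = \sum_(t <- ts) tv t.
Proof.
move=> HG hD; elim => [f g hr|f g g' hr _ IH] h0 hf.
  case: (altP (f =P 0)) => [->|fn]; first by exists [::]; rewrite big_nil.
  have [ts [h1 h2 _]] := red1_bound HG hD hr fn hf.
  by exists ts; split=> //; rewrite h2 h0 add0r.
case: (altP (f =P 0)) => [f0|fn].
  move: hr; rewrite f0 => /red1_0 g0.
  have [ts [h1 h2]] := IH h0 (fun Y => ltac:(by rewrite g0 cfv0 eqxx)).
  by exists ts; split=> //; rewrite -h2 g0.
have [ts [h1 h2 h3]] := red1_bound HG hD hr fn hf.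
have [ts' [h1' h2']] := IH h0 h3.
exists (ts' ++ ts); split; last by rewrite big_cat -h2' h2.
by move=> t; rewrite mem_cat => /orP [/h1'|/h1].
Qed.

Lemma syz_sum_seq (F : seq 'cV[A]_m) (rf : 'cV[A]_m -> R) :
  syz_sum iota x cf ordm F (map rf F) =
  \sum_(g <- F) (iota (rf g) * xm (gam cf ordm F g)) *: g.
Proof.
rewrite /syz_sum [RHS](big_nth 0) big_mkord; apply: eq_bigr => k _.
by rewrite (nth_map 0).
Qed.

Lemma syz_sum_lin (F : seq 'cV[A]_m) (b : seq R) (Bs : seq (seq R)) (c : seq R) :
  (forall k, (k < size F)%N -> b`_k = \sum_(j < size Bs) c`_j * (nth [::] Bs j)`_k) ->
  syz_sum iota x cf ordm F b =
  \sum_(j < size Bs) iota c`_j *: syz_sum iota x cf ordm F (nth [::] Bs j).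
Proof.
move=> hb; rewrite /syz_sum.
rewrite (eq_bigr (fun j : 'I_(size Bs) => \sum_(k < size F)
   (iota (c`_j * (nth [::] Bs j)`_k) * xm (gam cf ordm F F`_k)) *: F`_k)); last first.
  by move=> j _; rewrite scaler_sumr; apply: eq_bigr => k _; rewrite scalerA rmorphM mulrA.
rewrite exchange_big /=; apply: eq_bigr => k _.
by rewrite -scaler_suml -mulr_suml -rmorph_sum hb.
Qed.


Lemma syz_info (F : seq 'cV[A]_m) (i : 'I_m) (zeta : exps n) (b : seq R) :
  XF cf ordm F = Some (zeta, i) ->
  (forall g, g \in F -> exists beta, lmv cf ordm g = Some (beta, i) /\ dle beta zeta) ->
  (forall Y, cfv cf (syz_sum iota x cf ordm F b) Y != 0 -> ordm (zeta, i) Y) /\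
  cfv cf (syz_sum iota x cf ordm F b) (zeta, i) =
    \sum_(k < size F) b`_k * (syz_weights x sigma cf ordm F)`_k.
Proof.
move=> hXF hF.
have key : forall k : 'I_(size F), exists beta, [/\ lmv cf ordm F`_k = Some (beta, i),
    dle beta zeta & gam cf ordm F F`_k = esub zeta beta].
  move=> k; have [beta [hb hd]] := hF _ (mem_nth 0 (ltn_ord k)).
  by exists beta; split=> //; rewrite /gam hXF hb.
split.
  move=> Y; rewrite /syz_sum cfv_sum => /sum_nz [k _ hk].
  have [beta [hb hd hg]] := key k.
  have [_ [_ [_ h4]]] := lmvP hb.
  by have := term_bound h4 hk; rewrite hg /= eadd_esub'.
rewrite /syz_sum cfv_sum; apply: eq_bigr => k _.
have [beta [hb hd hg]] := key k.
rewrite hg -[X in cfv _ _ (X, i)](eadd_esub' hd) term_top.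
rewrite /syz_weights (nth_map 0) // hg hb /= (proj1 (proj2 (lmvP hb))).
by rewrite mulrA.
Qed.


Definition sbelow (X : vmon n m) (Y : vmon n m) := ordm X Y && (Y != X).

Lemma sbelow_down X Y Y' : sbelow X Y -> ordm Y Y' -> sbelow X Y'.
Proof.
move=> /andP [h1 h2] h3; rewrite /sbelow (ordm_trans h1 h3) /=.
apply: contra h2 => /eqP e; rewrite e in h3; apply/eqP; exact: ordm_anti.
Qed.

Definition Good (G : seq 'cV[A]_m) (D : vmon n m -> Prop) (v : 'cV[A]_m) :=
  exists ts, (forall t, t \in ts -> t.2 \in G /\ hgtD D t) /\ v = \sum_(t <- ts) tv t.

Lemma Good0 G D : Good G D 0.
Proof. by exists [::]; rewrite big_nil. Qed.
Lemma GoodD G D u v : Good G D u -> Good G D v -> Good G D (u + v).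
Proof.
move=> [t1 [h1 e1]] [t2 [h2 e2]]; exists (t1 ++ t2); split; last by rewrite big_cat e1 e2.
by move=> t; rewrite mem_cat => /orP [/h1|/h2].
Qed.
Lemma Good_sum G D (I : Type) (r : seq I) (P : pred I) (F : I -> 'cV[A]_m) :
  (forall i, P i -> Good G D (F i)) -> Good G D (\sum_(i <- r | P i) F i).
Proof. by move=> h; apply: (big_ind (Good G D)) => //; [exact: Good0 | exact: GoodD]. Qed.

Lemma tv_trans (d : exps n) (c : R) (t : R * exps n * 'cV[A]_m) :
  tv (sigma_pow sigma d (c * t.1.1) * cab x cf d t.1.2, eadd d t.1.2, t.2) =
  xm d *: (iota c *: tv t).
Proof.
rewrite /tv !scalerA /=; congr (_ *: _).
have [_ ec] := cab_spec d t.1.2.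
by rewrite mulrA -(mulrA (xm d)) -rmorphM xm_comm -mulrA ec rmorphM !mulrA.
Qed.

Lemma Good_shift G (d zeta : exps n) (i : 'I_m) (c : R) (ts : seq (R * exps n * 'cV[A]_m)) :
  (forall t, t \in ts -> t.2 \in G /\ hgtD (sbelow (zeta, i)) t) ->
  Good G (sbelow (eadd d zeta, i)) (xm d *: (iota c *: \sum_(t <- ts) tv t)).
Proof.
move=> hts.
exists [seq (sigma_pow sigma d (c * t.1.1) * cab x cf d t.1.2, eadd d t.1.2, t.2) | t <- ts].
split.
  move=> t' /mapP [t tts ->] /=; have [tG [Z [hZ hD]]] := hts t tts; split=> //.
  exists Z; split=> //=; rewrite eaddA.
  case/andP: hD => h1 h2; rewrite /sbelow (shift_le d h1) /=.
  by apply: contra h2 => /eqP [/eadd_inj -> ->].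
by rewrite big_map scaler_sumr scaler_sumr; apply: eq_bigr => t _; rewrite tv_trans.
Qed.


Lemma sum_ord_cast (N1 N2 : nat) (F : nat -> R) : N1 = N2 ->
  \sum_(k < N1) F k = \sum_(k < N2) F k.
Proof. by move->. Qed.

Lemma stepB (G : seq 'cV[A]_m) (B : seq 'cV[A]_m -> seq (seq R)) (xi : exps n) (i : 'I_m)
    (f : 'cV[A]_m) (ts : seq (R * exps n * 'cV[A]_m)) :
  all (fun g => g != 0) G -> uniq G ->
  (forall F, F != [::] -> subseq F G -> XF cf ordm F != None ->
     generates_syz (B F) (syz_weights x sigma cf ordm F)) ->
  (forall F, F != [::] -> subseq F G -> XF cf ordm F != None ->
     forall b, b \in B F -> red_plus iota x sigma cf ordm G (syz_sum iota x cf ordm F b) 0) ->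
  (forall t, t \in ts -> t.2 \in G /\ hgt t (xi, i)) -> f = \sum_(t <- ts) tv t ->
  cfv cf f (xi, i) = 0 ->
  Good G (sbelow (xi, i)) f.
Proof.
move=> HG uG HB Hsyz hts ef fX.
pose htop := fun t : R * exps n * 'cV[A]_m =>
  if lmv cf ordm t.2 is Some Z then (eadd t.1.2 Z.1, Z.2) == (xi, i) else false.
have etop : forall t, t \in ts -> htop t -> exists beta,
    [/\ t.2 \in G, lmv cf ordm t.2 = Some (beta, i) & eadd t.1.2 beta = xi].
  move=> t tts; rewrite /htop; case hZ: (lmv _ _ t.2) => [[beta j]|] //= /eqP [e1 e2].
  by exists beta; split => //; [case: (hts t tts) | rewrite e2].
set T := \sum_(t <- ts | htop t) tv t.
set Rs := \sum_(t <- ts | ~~ htop t) tv t.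
have split_f : f = T + Rs by rewrite ef (bigID htop).
have Grest : Good G (sbelow (xi, i)) Rs.
  rewrite /Rs big_seq_cond; apply: Good_sum => t /andP [tts nt].
  exists [:: t]; split; last by rewrite big_seq1.
  move=> t'; rewrite mem_seq1 => /eqP ->.
  have [tG [Z [hZ hX]]] := hts t tts; split=> //; exists Z; split=> //.
  by rewrite /sbelow hX /=; move: nt; rewrite /htop /= hZ.
have restX : cfv cf Rs (xi, i) = 0.
  rewrite /Rs cfv_sum big_seq_cond; apply: big1 => t0 /andP [tts nt].
  apply/eqP/negPn/negP => hnz.
  have [tG [Z [hZ hX]]] := hts t0 tts.
  have hh : hgt t0 (eadd t0.1.2 Z.1, Z.2) by exists Z; split=> //; exact: ordm_refl.
  have e := ordm_anti hX (tv_bound hh hnz).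
  by move: nt; rewrite /htop /= hZ -e eqxx.
have TX : cfv cf T (xi, i) = 0 by move: fX; rewrite split_f cfvD restX addr0.
suff Gtop : Good G (sbelow (xi, i)) T by rewrite split_f; apply: GoodD.
set F := [seq g <- G | mdiv (lmv cf ordm g) (Some (xi, i))].
have topF : forall t, t \in ts -> htop t -> t.2 \in F.
  move=> t tts ht; have [beta [tG hb he]] := etop t tts ht.
  rewrite mem_filter tG hb /= eqxx /= andbT -he.
  exact: (dle_eadd' t.1.2 beta).
case: (altP (F =P [::])) => [F0|Fn].
  have -> : T = 0.
    rewrite /T big_seq_cond big1 // => t /andP [tts ht].
    by have := topF t tts ht; rewrite F0.
  exact: Good0.
have hFi : forall g, g \in F -> exists beta, lmv cf ordm g = Some (beta, i) /\ dle beta xi.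
  move=> g; rewrite mem_filter => /andP [hm gG].
  have gn : g != 0 by move/allP: HG => /(_ _ gG).
  have [[beta j] [hb _ _]] := lmv_spec gn.
  by move: hm; rewrite hb /= => /andP [/eqP -> hd]; exists beta.
have [zeta [hXF hzx hbz]] := XF_spec Fn hFi.
have hFz : forall g, g \in F -> exists beta, lmv cf ordm g = Some (beta, i) /\ dle beta zeta.
  by move=> g gF; have [beta [hb _]] := hFi g gF; exists beta; split=> //; exact: hbz hb.
pose d := esub xi zeta.
have hxi : eadd d zeta = xi := eadd_esub' hzx.
have hgam : forall g beta, g \in F -> lmv cf ordm g = Some (beta, i) ->
    gam cf ordm F g = esub zeta beta by move=> g beta _ hb; rewrite /gam hXF hb.
have hal : forall beta, dle beta zeta -> eadd d (esub zeta beta) = esub xi beta.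
  move=> beta /forallP hb; move/forallP: hzx => hz; apply/ffunP => k; rewrite !ffunE.
  by rewrite addnBA // subnK.
pose cu g := cab x cf d (gam cf ordm F g).
pose dinv g := epsilon (inhabits 0) (fun e => cu g * e = 1 /\ e * cu g = 1).
have hdinv : forall g, dinv g * cu g = 1.
  move=> g; have [[e he] _] := cab_spec d (gam cf ordm F g).
  by have [] := epsilon_spec (inhabits 0) (fun e => cu g * e = 1 /\ e * cu g = 1) (ex_intro _ e he).
pose rho g := \sum_(t <- [seq t <- ts | htop t] | t.2 == g) t.1.1.
pose r' g := epsilon (inhabits 0) (fun r => sigma_pow sigma d r = rho g * dinv g).
have hr' : forall g, sigma_pow sigma d (r' g) = rho g * dinv g.
  move=> g; apply: (epsilon_spec (inhabits 0) (fun r => sigma_pow sigma d r = rho g * dinv g)).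
  by have [r hr] := spw_surj (enum 'I_n) d (rho g * dinv g); exists r.
pose v := syz_sum iota x cf ordm F (map r' F).
have eT : T = xm d *: v.
  rewrite /v syz_sum_seq scaler_sumr /T -big_filter.
  rewrite (@sum_group _ _ _ _ F (fun t => t.2)); last 2 first.
  - exact: filter_uniq.
  - by move=> t; rewrite mem_filter => /andP [ht tts]; exact: topF.
  apply: eq_big_seq => g gF.
  have [beta [hb hbz']] := hFz g gF.
  rewrite scalerA mulrA xm_comm hr' -mulrA (proj2 (cab_spec _ _)) (hgam _ _ gF hb) hal //.
  rewrite mulrA -rmorphM -mulrA -(hgam _ _ gF hb) hdinv mulr1.
  rewrite /rho rmorph_sum mulr_suml scaler_suml big_seq_cond [RHS]big_seq_cond.
  apply: eq_bigr => t /andP [ttop /eqP tg].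
  move: ttop; rewrite mem_filter => /andP [ht tts].
  have [beta' [tG hb' he]] := etop t tts ht.
  move: hb'; rewrite tg hb => -[eb]; rewrite -eb in he.
  by rewrite /tv -tg -he esub_eadd'.
have cfv_dv : cfv cf (xm d *: v) (xi, i) =
    sigma_pow sigma d (cfv cf v (zeta, i)) * cab x cf d zeta.
  by rewrite -(mul1r (xm d)) -(rmorph1 iota) -[X in (X, i)]hxi term_top mul1r.
have Sz : cfv cf v (zeta, i) = 0.
  have := TX; rewrite eT cfv_dv => H.
  have [[e [he1 he2]] _] := cab_spec d zeta.
  have H' : sigma_pow sigma d (cfv cf v (zeta, i)) = 0.
    by rewrite -[LHS]mulr1 -he1 mulrA H mul0r.
  by apply: (@spw_inj (enum 'I_n) d); rewrite spw0 -sp_spw.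
have sw : size (syz_weights x sigma cf ordm F) = size F by rewrite size_map.
have [_ hvz] := syz_info (map r' F) hXF hFz.
have syz : is_syz (syz_weights x sigma cf ordm F) (map r' F).
  split; first by rewrite sw size_map.
  rewrite (sum_ord_cast (fun k => (map r' F)`_k * (syz_weights x sigma cf ordm F)`_k) sw).
  by rewrite -hvz.
have hFne : XF cf ordm F != None by rewrite hXF.
have Fsub : subseq F G := filter_subseq _ _.
have [HB1 HB2] := HB F Fn Fsub hFne.
have [c [hc hcb]] := HB2 _ syz.
have ev : v = \sum_(j < size (B F)) iota c`_j *: syz_sum iota x cf ordm F (nth [::] (B F) j).
  by apply: syz_sum_lin => k hk; apply: hcb; rewrite sw.
rewrite eT ev scaler_sumr; apply: Good_sum => j _.
set bj := nth [::] (B F) j.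
have bjB : bj \in B F := mem_nth [::] (ltn_ord j).
have [hsz hsum] := HB1 bj bjB.
have [hbnd htopv] := syz_info bj hXF hFz.
have hD : forall Y, cfv cf (syz_sum iota x cf ordm F bj) Y != 0 -> sbelow (zeta, i) Y.
  move=> Y hY; rewrite /sbelow (hbnd _ hY) /=; apply: contraNneq hY => ->.
  rewrite htopv -(sum_ord_cast (fun k => bj`_k * (syz_weights x sigma cf ordm F)`_k) sw).
  by rewrite hsum.
have [tsj [h1 h2]] := rp_rep HG (@sbelow_down (zeta, i)) (Hsyz F Fn Fsub hFne bj bjB) erefl hD.
rewrite h2 -hxi; exact: Good_shift h1.
Qed.


Definition hv (X : vmon n m) (t : R * exps n * 'cV[A]_m) : vmon n m :=
  if lmv cf ordm t.2 is Some Z then (eadd t.1.2 Z.1, Z.2) else X.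

Lemma stepC (G : seq 'cV[A]_m) (B : seq 'cV[A]_m -> seq (seq R)) :
  all (fun g => g != 0) G -> uniq G ->
  (forall F, F != [::] -> subseq F G -> XF cf ordm F != None ->
     generates_syz (B F) (syz_weights x sigma cf ordm F)) ->
  (forall F, F != [::] -> subseq F G -> XF cf ordm F != None ->
     forall b, b \in B F -> red_plus iota x sigma cf ordm G (syz_sum iota x cf ordm F b) 0) ->
  forall f Xf, lmv cf ordm f = Some Xf -> forall X ts,
  (forall t, t \in ts -> t.2 \in G /\ hgt t X) -> f = \sum_(t <- ts) tv t ->
  exists ts', (forall t, t \in ts' -> t.2 \in G /\ hgt t Xf) /\ f = \sum_(t <- ts') tv t.
Proof.
move=> HG uG HB Hsyz f Xf hXf X; elim/wf_vmon: X => X IH ts hts ef.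
have [fn [_ [hf1 hf2]]] := lmvP hXf.
case/boolP: (ordm Xf X) => hXX.
  exists ts; split=> // t tts; have [tG [Z [hZ hZX]]] := hts t tts; split=> //.
  by exists Z; split=> //; exact: ordm_trans hXX hZX.
have fX : cfv cf f X = 0.
  by apply/eqP/negPn/negP => /hf2 h; rewrite h in hXX.
case: X IH hts fX hXX => xi i IH hts fX _.
have [ts2 [h2 e2]] := stepB HG uG HB Hsyz hts ef fX.
have ne : [seq hv (xi, i) t | t <- ts2] != [::].
  apply/eqP => /eqP; rewrite -size_eq0 size_map size_eq0 => /eqP t0.
  by move: fn; rewrite e2 t0 big_nil eqxx.
have [X' X'L hX'] := max_seq ne.
move/mapP: X'L => [t0 t0s eX'].
have [_ [Z0 [hZ0 hs0]]] := h2 t0 t0s.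
rewrite /hv hZ0 in eX'; rewrite -eX' in hs0; case/andP: hs0 => hs1 hs2.
apply: (IH X' hs1 hs2 ts2) => // t tts; have [tG [Z [hZ _]]] := h2 t tts; split=> //.
exists Z; split=> //; have := hX' (hv (xi, i) t) (map_f _ tts).
by rewrite /hv hZ.
Qed.

Lemma reducible_of (G : seq 'cV[A]_m) f Xf ts : lmv cf ordm f = Some Xf ->
  (forall t, t \in ts -> t.2 \in G /\ hgt t Xf) -> f = \sum_(t <- ts) tv t ->
  reducible iota x sigma cf ordm G f.
Proof.
move=> hXf hts ef; have [fn [hlc [hf1 hf2]]] := lmvP hXf.
case: Xf hXf hts hlc hf1 hf2 => xi i hXf hts hlc hf1 hf2.
pose htop := fun t : R * exps n * 'cV[A]_m =>
  if lmv cf ordm t.2 is Some Z then (eadd t.1.2 Z.1, Z.2) == (xi, i) else false.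
have etop : forall t, t \in ts -> htop t -> exists beta,
    [/\ t.2 \in G, lmv cf ordm t.2 = Some (beta, i) & eadd t.1.2 beta = xi].
  move=> t tts; rewrite /htop; case hZ: (lmv _ _ t.2) => [[beta j]|] //= /eqP [e1 e2].
  by exists beta; split => //; [case: (hts t tts) | rewrite e2].
pose L := [seq (t.2, t.1.1) | t <- [seq t <- ts | htop t]].
split=> //.
exists (f - \sum_(p <- L) (iota p.2 * xm (esub (expo (lmv cf ordm f)) (expo (lmv cf ordm p.1)))) *: p.1).
right; split=> //; exists L; split => //.
- apply/allP => p /mapP [t]; rewrite mem_filter => /andP [ht tts] -> /=.
  by have [] := hts t tts.
- apply/allP => p /mapP [t]; rewrite mem_filter => /andP [ht tts] -> /=.
  have [beta [tG hb he]] := etop t tts ht.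
  by rewrite hb hXf /= eqxx /= -he; exact: (dle_eadd' t.1.2 beta).
rewrite hlc ef cfv_sum (bigID htop) /=.
have -> : \sum_(t <- ts | ~~ htop t) cfv cf (tv t) (xi, i) = 0.
  rewrite big_seq_cond; apply: big1 => t0 /andP [tts nt].
  apply/eqP/negPn/negP => hnz.
  have [tG [Z [hZ hX]]] := hts t0 tts.
  have hh : hgt t0 (eadd t0.1.2 Z.1, Z.2) by exists Z; split=> //; exact: ordm_refl.
  have e := ordm_anti hX (tv_bound hh hnz).
  by move: nt; rewrite /htop /= hZ -e eqxx.
rewrite addr0 /L big_map -big_filter -ef hXf /=; apply: eq_big_seq => t.
rewrite mem_filter => /andP [ht tts]; have [beta [tG hb he]] := etop t tts ht.
rewrite /tv hb /= -[X in cfv _ _ (X, i)]he term_top -he esub_eadd'.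
by rewrite (proj1 (proj2 (lmvP hb))).
Qed.

Lemma stepA (G : seq 'cV[A]_m) f : all (fun g => g != 0) G -> spanned G f ->
  Good G (fun _ => True) f.
Proof.
move=> HG [a [_ ->]]; apply: Good_sum => k _.
have gG : G`_k \in G by apply: mem_nth.
have gn : G`_k != 0 by move/allP: HG => /(_ _ gG).
have [Z [hZ _ _]] := lmv_spec gn.
have [s [_ _ ea]] := Hcr a`_k.
exists [seq (cf a`_k b, b, G`_k) | b <- s]; split.
  by move=> t /mapP [b _ ->]; split=> //; exists Z.
by rewrite big_map {1}ea scaler_suml.
Qed.

Lemma main (M : 'cV[A]_m -> Prop) (G : seq 'cV[A]_m) (B : seq 'cV[A]_m -> seq (seq R)) :
  is_submodule M -> (exists v, M v /\ v != 0) ->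
  uniq G -> all (fun g => g != 0) G -> (forall v, M v <-> spanned G v) ->
  (forall F, F != [::] -> subseq F G -> XF cf ordm F != None ->
     generates_syz (B F) (syz_weights x sigma cf ordm F)) ->
  is_groebner iota x sigma cf ordm M G <->
  (forall F, F != [::] -> subseq F G -> XF cf ordm F != None ->
     forall b, b \in B F -> red_plus iota x sigma cf ordm G (syz_sum iota x cf ordm F b) 0).
Proof.
move=> HM [v0 [Mv0 v0n]] uG HG Hsp HB; split.
  move=> Hgb F Fn Fs _ b _; apply: (forward HM Hgb).
  rewrite /syz_sum; case: HM => M0 MD MZ; apply: (big_ind M) => // k _.
  apply: MZ; apply/Hsp; have gG : F`_k \in G by apply: (mem_subseq Fs); apply: mem_nth.
  move: gG; set g := F`_k => gG.
  exists (mkseq (fun j => if j == index g G then 1 else 0) (size G)); split.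
    by rewrite size_mkseq.
  have hi : (index g G < size G)%N by rewrite index_mem.
  rewrite (bigD1 (Ordinal hi)) //= nth_mkseq // eqxx scale1r nth_index // big1 ?addr0 //.
  move=> j hj; rewrite nth_mkseq //; case: eqP => [e|_]; last by rewrite scale0r.
  by move: hj; rewrite -val_eqE /= e eqxx.
move=> Hsyz; split => //.
- apply/eqP => G0; move: v0n; have [a [_ ->]] := (Hsp v0).1 Mv0.
  by rewrite G0 big_ord0 eqxx.
- move=> g gG; apply/Hsp.
  exists (mkseq (fun j => if j == index g G then 1 else 0) (size G)); split.
    by rewrite size_mkseq.
  have hi : (index g G < size G)%N by rewrite index_mem.
  rewrite (bigD1 (Ordinal hi)) //= nth_mkseq // eqxx scale1r nth_index // big1 ?addr0 //.
  move=> j hj; rewrite nth_mkseq //; case: eqP => [e|_]; last by rewrite scale0r.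
  by move: hj; rewrite -val_eqE /= e eqxx.
move=> f Mf fn.
have [ts [hts ef]] := stepA HG ((Hsp f).1 Mf).
have [Xf [hXf _ _]] := lmv_spec fn.
have ne : [seq hv Xf t | t <- ts] != [::].
  apply/eqP => /eqP; rewrite -size_eq0 size_map size_eq0 => /eqP t0.
  by move: fn; rewrite ef t0 big_nil eqxx.
have [X0 _ hX0] := max_seq ne.
have hts0 : forall t, t \in ts -> t.2 \in G /\ hgt t X0.
  move=> t tts; have [tG [Z [hZ _]]] := hts t tts; split=> //.
  exists Z; split=> //; have := hX0 (hv Xf t) (map_f _ tts); by rewrite /hv hZ.
have [ts' [h1 h2]] := stepC HG uG HB Hsyz hXf hts0 ef.
exact: reducible_of hXf h1 h2.
Qed.

End Dev.

Unset Implicit Arguments.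
Theorem theorem30 (R A : nzRingType) (n m : nat) (iota : {rmorphism R -> A})
  (x : 'I_n -> A) (sigma : 'I_n -> R -> R) (cf : A -> exps n -> R)
  (ordA : rel (exps n)) (ordm : rel (exps n * 'I_m))
  (B : seq 'cV[A]_m -> seq (seq R)) (M : 'cV[A]_m -> Prop) (G : seq 'cV[A]_m) :
  (* standing assumption on R *)
  left_noetherian R ->
  (* A = sigma(R)<x_1,...,x_n> *)
  injective iota ->
  (forall i, ~ exists r, x i = iota r) ->
  mon_lin_indep iota x ->
  coord_repr iota x cf ->
  (* quasi-commutative *)
  (forall i r, x i * iota r = iota (sigma i r) * x i) ->
  (forall i j, exists c : R, [/\ c != 0, x j * x i = iota c * (x i * x j) &
      ((i < j)%N -> exists d, c * d = 1 /\ d * c = 1)]) ->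
  (* bijective *)
  (forall i, bijective (sigma i)) ->
  (* monomial orders *)
  monorderA x cf ordA ->
  monorderV x cf ordA ordm ->
  (* M <> 0 submodule, G a finite set of nonzero generators *)
  is_submodule M -> (exists v, M v /\ v != 0) ->
  uniq G -> all (fun g => g != 0) G -> (forall v, M v <-> spanned G v) ->
  (* B_F *)
  (forall F, F != [::] -> subseq F G -> XF cf ordm F != None ->
     generates_syz (B F) (syz_weights x sigma cf ordm F)) ->
  is_groebner iota x sigma cf ordm M G <->
  (forall F, F != [::] -> subseq F G -> XF cf ordm F != None ->
     forall b, b \in B F -> red_plus iota x sigma cf ordm G (syz_sum iota x cf ordm F b) 0).
Proof.
move=> _ Hinj _ Hli Hcr Hqc1 Hqc2 Hbij HoA HoV HM Mnz uG HG Hsp HB.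
by apply: (main Hli Hcr Hqc1 Hqc2 Hbij HoA HoV HM Mnz uG HG Hsp HB).
Qed.
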